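(* Let $q$ be a prime, $A$ a group of exponent $q$ and order $q^3$. Suppose $A$ acts by automorphisms on a finite group $G$ of order coprime to $q$ with $G=PH$, where $P$ and $H$ are $A$-invariant subgroups, $P$ is a normal $p$-subgroup of $G$ for a prime $p$, and $H$ is a nilpotent $p'$-subgroup. If $[C_P(a),C_H(a)]=1$ for every nontrivial $a\in A$, then $[P,H]=1$.
   Context: $C_X(a)$ denotes the fixed points of $a$ in $X$; $[X,Y]$ is the subgroup generated by commutators of elements of $X$ and $Y$. *)

(* Defs.v *)
From mathcomp Require Import all_boot all_fingroup all_solvable.
Set Implicit Arguments. Unset Strict Implicit. Unset Printing Implicit Defensive.

(* Main.v *)
Require Import Defs.
From mathcomp Require Import all_boot all_fingroup all_solvable.
Set Implicit Arguments. Unset Strict Implicit. Unset Printing Implicit Defensive.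
Import GroupScope.
From mathcomp Require Import ssralg finmodule zify.
Import GRing.Theory FiniteModule.
Local Notation "u ^@ x" := (actr u x) : group_scope.

Section Arith.

Lemma mulmod_inj q j (q_gt0 : 0 < q) : coprime j q ->
  injective (fun i : 'I_q => Ordinal (ltn_pmod (i * j) q_gt0)).
Proof.
move=> co i i' /(congr1 val) /= h; apply: val_inj => /=.
wlog le: i i' h / (i' <= i)%N.
  move=> IH; case: (leqP i' i) => [le|/ltnW le]; first exact: IH.
  by symmetry; apply: IH.
have: q %| (i - i') * j by rewrite mulnBl -eqn_mod_dvd ?leq_mul2r ?le ?orbT // h.
rewrite Gauss_dvdl 1?coprime_sym // => dv.
have lt: (i - i' < q)%N by rewrite (leq_ltn_trans (leq_subr _ _)).
have: i - i' == 0.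
  case: posnP => // pos; move: (dvdn_leq pos dv); rewrite leqNgt lt //.
by rewrite subn_eq0 => le'; apply/eqP; rewrite eqn_leq le le'.
Qed.

End Arith.

Section Sums.
Variable M : zmodType.
Local Open Scope ring_scope.

Lemma sum_mulmod q j (F : nat -> M) (q_gt0 : (0 < q)%N) : coprime j q ->
  (forall n, F (n %% q)%N = F n) -> \sum_(i < q) F (i * j)%N = \sum_(i < q) F i.
Proof.
move=> co per; rewrite [RHS](reindex_inj (@mulmod_inj q j q_gt0 co)) /=.
by apply: eq_bigr => i _; rewrite per.
Qed.

Lemma sum_shift q (F : nat -> M) : F q = F 0%N ->
  \sum_(i < q) F i.+1 = \sum_(i < q) F i.
Proof.
case: q => [|q] per; first by rewrite !big_ord0.
by rewrite [LHS]big_ord_recr [RHS]big_ord_recl /= per addrC.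
Qed.

End Sums.

Section GenL.
Variables (gT : finGroupType) (W : {group gT}) (abW : abelian W) (q : nat) (x y : gT).
Hypotheses (pq : prime q) (coWq : coprime #|W| q) (nWx : x \in 'N(W)) (nWy : y \in 'N(W)).
Hypotheses (xq : x ^+ q = 1) (yq : y ^+ q = 1).
Hypothesis cxy : forall w, w \in W -> (w ^ x) ^ y = (w ^ y) ^ x.

Lemma comm_pow w k : w \in W -> (w ^ (x ^+ k)) ^ y = (w ^ y) ^ (x ^+ k).
Proof.
elim: k w => [|k IH] w Ww; first by rewrite !expg0 !conjg1.
rewrite expgS !conjgM IH ?memJ_norm // cxy //.
Qed.

Lemma actX w i j : w \in W -> w ^ ((y * x ^+ i) ^+ j) = w ^ (y ^+ j * x ^+ (i * j)).
Proof.
move=> Ww; elim: j => [|j IH]; first by rewrite !expg0 muln0 expg0 mulg1.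
rewrite expgSr conjgM IH !conjgM comm_pow ?memJ_norm ?groupX //.
by rewrite expgSr mulnS addnC expgD !conjgM.
Qed.


Lemma NmC (g : gT) (v : fmod_of abW) : g \in 'N(W) ->
    (forall w, w \in W -> w ^ (g ^+ q) = w) ->
  fmval (\sum_(j < q) actr v (g ^+ j))%R \in 'C_W[g].
Proof.
move=> Ng per; apply/setIP; split; first exact: fmodP.
apply/cent1P/commgP/conjg_fixP.
rewrite -fmvalJ //; congr fmval; rewrite actr_sum.
rewrite -[RHS](@sum_shift _ q (fun n => actr v (g ^+ n))); last first.
  by apply: val_inj; rewrite expg0 actr1 fmvalJ ?groupX // per ?fmodP.
by apply: eq_bigr => j _; rewrite -actrM ?groupX // expgSr.
Qed.

Lemma genL (L : {group gT}) : 'C_W[x] \subset L ->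
  (forall i, 'C_W[y * x ^+ i] \subset L) -> W \subset L.
Proof.
move=> sCxL sCyL; apply/subsetP => w Ww.
have q_gt0 := prime_gt0 pq.
pose u := fmod abW w.
have inL0: fmval (0 : fmod_of abW)%R \in L by rewrite fmval0 group1.
have inLD: forall a b : fmod_of abW, fmval a \in L -> fmval b \in L -> fmval (a + b)%R \in L.
  by move=> a b La Lb; rewrite fmvalA groupM.
have inLN: forall a : fmod_of abW, fmval a \in L -> fmval (- a)%R \in L.
  by move=> a La; rewrite fmvalN groupV.
pose S1 := (\sum_(i < q) \sum_(j < q) actr u ((y * x ^+ i) ^+ j))%R.
pose j0 := Ordinal q_gt0.
pose S2 := (\sum_(j < q | j != j0) \sum_(i < q) actr (fmod abW (w ^ (y ^+ j))) (x ^+ i))%R.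
have key: (u *+ q = S1 - S2)%R.
  apply/eqP; rewrite eq_sym subr_eq; apply/eqP.
  rewrite /S1 exchange_big /= (bigD1 j0) //=; congr (_ + _)%R.
    under eq_bigr => i _ do rewrite expg0 act1.
    by rewrite sumr_const card_ord.
  rewrite /S2; apply: eq_bigr => j nj0.
  have j_gt0: (0 < j)%N.
    by rewrite lt0n; apply: contra nj0 => /eqP j0E; apply/eqP; apply: val_inj.
  have coj: coprime j q.
    rewrite coprime_sym prime_coprime //; apply/negP => /(dvdn_leq j_gt0).
    by rewrite leqNgt ltn_ord.
  have per: forall n, actr (fmod abW (w ^ (y ^+ j))) (x ^+ (n %% q)) =
                      actr (fmod abW (w ^ (y ^+ j))) (x ^+ n).
    by move=> n; rewrite expg_mod.
  rewrite -(@sum_mulmod _ q j (fun n => actr (fmod abW (w ^ (y ^+ j))) (x ^+ n)) q_gt0 coj per).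
  apply: eq_bigr => i _.
  have Ng: (y * x ^+ i) ^+ j \in 'N(W) by rewrite groupX // groupM ?groupX.
  rewrite /u -[LHS](fmodJ _ _ Ng).
  by rewrite (@actX w i j Ww) conjgM fmodJ ?groupX.
have inLS: forall (P : pred 'I_q) (F : 'I_q -> fmod_of abW),
    (forall i, P i -> fmval (F i) \in L) -> fmval (\sum_(i < q | P i) F i)%R \in L.
  by move=> P F HF; elim/big_rec: _ => // i s Pi Ls; apply: inLD => //; apply: HF.
have: fmval (u *+ q)%R \in L.
  rewrite key; apply: inLD.
    apply: inLS => i _; apply: (subsetP (sCyL i)); apply: NmC.
      by rewrite groupM ?groupX.
    by move=> w' Ww'; rewrite (@actX w' i q Ww') yq mul1g mulnC expgM xq expg1n conjg1.
  apply: inLN; apply: inLS => j _; apply: (subsetP sCxL); apply: NmC => // w' Ww'.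
  by rewrite xq conjg1.
rewrite fmvalZ fmodK // => Lwq.
by rewrite -(expgK coWq Ww) groupX.
Qed.

End GenL.

Section Trace.
Variables (gT : finGroupType) (P H K : {group gT}) (e : gT).
Hypotheses (abP : abelian P) (abH : abelian H) (sKH : K \subset H).
Hypotheses (nPH : H \subset 'N(P)) (coPH : coprime #|P| #|H|) (tiCPH : 'C_P(H) = 1).
Hypothesis maxK : forall h, h \in H -> h \notin K -> H \subset K <*> <[h]>.
Hypotheses (nPe : e \in 'N(P)) (nHe : e \in 'N(H)) (pe : prime #[e]) (eK : e \notin 'N(K)).
Hypothesis hyp : [~: 'C_P[e], 'C_H[e]] = 1.

Lemma fixJ (x y : gT) : commute x y -> x ^ y = x.
Proof. by move/commgP/conjg_fixP. Qed.

Lemma trace_cent : 'C_H[e] \subset 'C('C_P(K)).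
Proof.
apply/subsetP => h /setIP[Hh Ceh]; apply/centP => v /setIP[Pv CKv].
have nPh : h \in 'N(P) := subsetP nPH h Hh.
have sKNP : K \subset 'N(P) := subset_trans sKH nPH.
have sEN : <[e]> \subset 'N(P) by rewrite cycle_subG.
have sENH : <[e]> \subset 'N(H) by rewrite cycle_subG.
have Pvh : v ^ h \in P by rewrite memJ_norm.
have hK : forall k, k \in K -> commute h k.
  by move=> k Kk; apply: (centsP abH) => //; apply: (subsetP sKH).
have fixv : forall k, k \in K -> fmod abP v ^@ k = fmod abP v.
  move=> k Kk; rewrite -fmodJ ?(subsetP sKNP) //.
  by rewrite fixJ //; apply: (centP CKv).
have fixvh : forall k, k \in K -> fmod abP (v ^ h) ^@ k = fmod abP (v ^ h).
  move=> k Kk; rewrite -fmodJ ?(subsetP sKNP) // -!conjgM.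
  by rewrite (hK k Kk) conjgM (@fixJ v k) //; apply: (centP CKv).
pose ut := (fmod abP (v ^ h) - fmod abP v)%R.
have fixu : forall k, k \in K -> ut ^@ k = ut.
  by move=> k Kk; rewrite actAr actNr fixv // fixvh.
pose t := (\sum_(g in <[e]>) fmod abP v ^@ g)%R.
have te : t ^@ e = t.
  rewrite /t actr_sum [RHS](reindex_inj (mulIg e)) /=.
  apply: eq_big => [g | g Eg]; first by rewrite groupMr ?cycle_id.
  by rewrite actrM ?(subsetP sEN) ?cycle_id.
have tC : fmval t \in 'C_P[e].
  apply/setIP; split; first exact: fmodP.
  apply/cent1P/commgP/conjg_fixP; rewrite -fmvalJ //; first by rewrite te.
have th : t ^@ h = t.
  apply: val_inj; rewrite fmvalJ //; apply/conjg_fixP; apply/eqP.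
  have: [~ fmval t, h] \in [~: 'C_P[e], 'C_H[e]] by rewrite mem_commg // inE Hh.
  by rewrite hyp => /set1P.
have hE : h \in 'C(<[e]>) by rewrite cent_cycle.
have sum0 : (\sum_(g in <[e]>) ut ^@ g = 0)%R.
  under eq_bigr => g _ do rewrite actAr actNr.
  rewrite sumrB; apply/eqP; rewrite subr_eq0; apply/eqP.
  apply: etrans (_ : _ = t ^@ h) _; last by rewrite th.
  rewrite /t actr_sum; apply: eq_bigr => g Eg.
  have Ng := subsetP sEN g Eg.
  by rewrite fmodJ // -actrM // (centP hE g Eg) actrM.
pose NK (w : fmod_of abP) := (\sum_(k in K) w ^@ k)%R.
have NKsum : NK (\sum_(g in <[e]>) ut ^@ g)%R = (\sum_(g in <[e]>) NK (ut ^@ g))%R.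
  by rewrite /NK; under eq_bigr => k _ do rewrite actr_sum; rewrite exchange_big.
have NK1 : NK ut = (ut *+ #|K|)%R.
  by rewrite /NK; under eq_bigr => k Kk do rewrite fixu //; rewrite sumr_const.
have NKg : forall g, g \in <[e]> -> g != 1 -> NK (ut ^@ g) = 0%R.
  move=> g Eg ntg.
  have Ng : g \in 'N(P) := subsetP sEN g Eg.
  have NHg : g \in 'N(H) := subsetP sENH g Eg.
  have defg : <[g]> = <[e]>.
    apply/eqP; rewrite eqEcard cycle_subG Eg /=.
    have dv: #[g] %| #[e] by rewrite !orderE cardSg // cycle_subG.
    case/primeP: pe => _ /(_ _ dv) /orP[|/eqP og].
      by rewrite order_eq1 (negbTE ntg).
    by rewrite -!orderE og.
  have sKgH : K :^ g \subset H by rewrite -(normP NHg) conjSg.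
  have [h' Kgh' nKh'] : exists2 h', h' \in K :^ g & h' \notin K.
    apply/subsetPn; apply: contra eK => sKgK.
    have : g \in 'N(K) by rewrite inE.
    by rewrite -cycle_subG defg cycle_subG.
  have sHKK : H \subset K <*> K :^ g.
    apply: subset_trans (maxK (subsetP sKgH h' Kgh') nKh') _.
    rewrite join_subG joing_subl /=; apply: subset_trans (joing_subr K (K :^ g)).
    by rewrite cycle_subG.
  apply: val_inj; rewrite fmval0.
  suff: fmval (NK (ut ^@ g)) \in 'C_P(H) by rewrite tiCPH => /set1P.
  apply/setIP; split; first exact: fmodP.
  apply: subsetP (centS sHKK) _ _; rewrite centY; apply/setIP; split.
    apply/centP => k Kk; apply/commgP/conjg_fixP; rewrite -fmvalJ ?(subsetP sKNP) //.
    congr fmval; rewrite /NK actr_sum [RHS](reindex_inj (mulIg k)) /=.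
    apply: eq_big => [k' | k' Kk']; first by rewrite groupMr.
    by rewrite actrM ?(subsetP sKNP) ?groupM.
  apply/centP => k2 Kk2.
  have Hk2 : k2 \in H := subsetP sKgH k2 Kk2.
  have Nk2 : k2 \in 'N(P) := subsetP nPH k2 Hk2.
  have fixug : ut ^@ g ^@ k2 = ut ^@ g.
    case/imsetP: Kk2 => k0 Kk0 ->.
    have Nk0 := subsetP sKNP k0 Kk0.
    by rewrite -actrM ?groupJ // -conjgC actrM // fixu.
  apply/commgP/conjg_fixP; rewrite -fmvalJ //; congr fmval.
  rewrite /NK actr_sum; apply: eq_bigr => k Kk.
  have Hk : k \in H := subsetP sKH k Kk.
  have Nk := subsetP sKNP k Kk.
  rewrite -(actrM Nk Nk2) (centsP abH k Hk k2 Hk2).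
  by rewrite (actrM Nk2 Nk) fixug.
have : (ut *+ #|K| = 0)%R.
  rewrite -NK1 -[RHS](_ : NK 0%R = 0%R); last first.
    by rewrite /NK big1 // => k _; rewrite act0r.
  rewrite -sum0 NKsum (bigD1 1) ?group1 //= act1 big1 ?addr0 // => g /andP[Eg ntg].
  exact: NKg.
move/(congr1 fmval); rewrite fmvalZ fmval0 => utK.
have coPK : coprime #|P| #|K| by rewrite (coprimegS sKH).
have ut1 : val ut = 1.
  by rewrite -(expgK coPK (fmodP ut)) utK expg1n.
have : fmod abP (v ^ h) = fmod abP v.
  by apply/eqP; rewrite -subr_eq0; apply/eqP; apply: val_inj; rewrite -/ut ut1 fmval0.
move/(congr1 fmval); rewrite !fmodK // => vh.
by apply/commute_sym; apply/commgP/conjg_fixP.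
Qed.


End Trace.

Section QArith.
Lemma q_lt3 q : (1 < q)%N -> (q < q ^ 3)%N.
Proof. by move=> h; rewrite !expnS expn0 muln1; nia. Qed.
Lemma qq_lt3 q : (1 < q)%N -> (q * q < q ^ 3)%N.
Proof. by move=> h; rewrite !expnS expn0 muln1; nia. Qed.
Lemma q3_gt1 q : (1 < q)%N -> (1 < q ^ 3)%N.
Proof. by move=> h; rewrite !expnS expn0 muln1; nia. Qed.
Lemma q3_div q X : (1 < q)%N -> (q * X = q ^ 3)%N -> X = (q ^ 2)%N.
Proof. by move=> h; rewrite !expnS expn0 !muln1 => e; nia. Qed.
Lemma idx_bound q c i : (1 < q)%N -> (c * i = q ^ 3)%N -> (i <= q)%N -> (q ^ 2 <= c)%N.
Proof. move=> h; rewrite !expnS expn0 !muln1 => e le; nia. Qed.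
End QArith.

Section AFacts.
Variables (gT : finGroupType) (q : nat) (A : {group gT}).
Hypotheses (pq : prime q) (expA : exponent A = q) (oA : #|A| = (q ^ 3)%N).

Lemma q_gt1 : (1 < q)%N. Proof. exact: prime_gt1. Qed.

Lemma AF_xq a : a \in A -> a ^+ q = 1.
Proof. by rewrite -expA; apply: expg_exponent. Qed.

Lemma AF_ord a : a \in A -> a != 1 -> #[a] = q.
Proof.
move=> Aa nt; have dv: #[a] %| q by rewrite -expA dvdn_exponent.
case/primeP: pq => _ /(_ _ dv) /orP[/eqP o1|/eqP //].
by move: nt; rewrite -order_eq1 o1.
Qed.

Lemma AF_ord_le a : a \in A -> (#[a] <= q)%N.
Proof. by move=> Aa; rewrite dvdn_leq ?prime_gt0 // -expA dvdn_exponent. Qed.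

Lemma AF_qgroup : q.-group A.
Proof. by rewrite /pgroup oA pnatX pnat_id. Qed.

Lemma AF_out (X : {set gT}) : (#|X| < q ^ 3)%N -> exists2 y, y \in A & y \notin X.
Proof.
move=> lt; apply/subsetPn; apply: contraTN lt => sAX.
by rewrite -leqNgt -oA subset_leq_card.
Qed.

Lemma card_mul_le (X Y : {group gT}) : (#|(X * Y)%g| <= #|X| * #|Y|)%N.
Proof. by rewrite mul_cardG leq_pmulr // cardG_gt0. Qed.

Lemma AF1 (D : {group gT}) : D \subset A -> (q ^ 2 <= #|D|)%N ->
  exists x y, [/\ x \in D, y \in D, x != 1, commute x y & y \notin <[x]>].
Proof.
move=> sDA le; have qD : q.-group D := pgroupS sDA AF_qgroup.
have q1 := q_gt1.
have ntD : D :!=: 1.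
  apply: contraTneq le => ->; rewrite cards1 -ltnNge.
  by apply: (leq_trans q1); rewrite expnS expn1 leq_pmulr // ltnW.
have : 'Z(D) != 1 by rewrite (center_nil_eq1 (pgroup_nil qD)).
case/trivgPn => x /setIP[Dx CDx] ntx.
have [y Dy nyx] : exists2 y, y \in D & y \notin <[x]>.
  apply/subsetPn; apply: contraTN le => sDx; rewrite -ltnNge.
  apply: leq_ltn_trans (subset_leq_card sDx) _; rewrite -orderE.
  apply: leq_ltn_trans (AF_ord_le (subsetP sDA x Dx)) _.
  by rewrite expnS expn1 ltn_Pmulr // ltnW.
exists x, y; split => //; exact: (centP CDx).
Qed.

Lemma AF3 x : x \in A ->
  exists c a, [/\ c \in A, a \in A, c \notin <[x]> & forall i, a * c ^+ i \notin <[x]>].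
Proof.
move=> Ax; have q1 := q_gt1.
have lex := AF_ord_le Ax.
have [c Ac ncx] : exists2 c, c \in A & c \notin <[x]>.
  apply: AF_out; rewrite -orderE; apply: leq_ltn_trans lex _.
  exact: q_lt3.
have lec := AF_ord_le Ac.
have [a Aa nacx] : exists2 a, a \in A & a \notin <[x]> * <[c]>.
  apply: AF_out; apply: leq_ltn_trans (card_mul_le _ _) _; rewrite -!orderE.
  exact: leq_ltn_trans (leq_mul lex lec) (qq_lt3 q1).
exists c, a; split => // i; apply: contra nacx => acx.
by rewrite -(mulgK (c ^+ i) a) mem_mulg // groupV mem_cycle.
Qed.

Lemma AF2 (S : {group gT}) : S \subset A -> ~~ (A \subset S) ->
  exists x y, [/\ x \in 'Z(A), x != 1, A^`(1) \subset <[x]>, y \in A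
                & forall i, y * x ^+ i \notin S].
Proof.
move=> sSA nAS; have q1 := q_gt1.
have ltS : (#|S| < q ^ 3)%N.
  by rewrite -oA proper_card // properEneq sSA andbT; apply: contraNneq nAS => ->.
have key : forall x, (#|(S * <[x]>)%g| < q ^ 3)%N ->
    exists2 y, y \in A & forall i, y * x ^+ i \notin S.
  move=> x lt; have [y Ay nySx] := AF_out lt; exists y => // i.
  apply: contra nySx => ySx.
  by rewrite -(mulgK (x ^+ i) y) mem_mulg // groupV mem_cycle.
have ntA : A :!=: 1 by rewrite -cardG_gt1 oA q3_gt1.
case: (boolP (abelian A)) => [abA | nabA].
  have dA : A^`(1) = 1 by apply/derG1P.
  case: (eqsVneq S 1) => [S1 | ntS].
    case/trivgPn: ntA => x Ax ntx.
    have [y Ay Hy] : exists2 y, y \in A & forall i, y * x ^+ i \notin S.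
      apply: key; rewrite S1 mul1g -orderE.
      apply: leq_ltn_trans (AF_ord_le Ax) _; exact: q_lt3.
    exists x, y; split => //; last by rewrite dA sub1G.
    by rewrite inE Ax (subsetP abA).
  case/trivgPn: ntS => x Sx ntx; have Ax := subsetP sSA x Sx.
  have [y Ay Hy] : exists2 y, y \in A & forall i, y * x ^+ i \notin S.
    by apply: key; rewrite mulGSid // cycle_subG.
  exists x, y; split => //; last by rewrite dA sub1G.
  by rewrite inE Ax (subsetP abA).
have qA := AF_qgroup.
have nZA : A \subset 'N('Z(A)) := normal_norm (center_normal A).
have ntZ : 'Z(A) != 1 by rewrite (center_nil_eq1 (pgroup_nil qA)).
have oZ : #|'Z(A)| = q.
  have : #|'Z(A)| %| q ^ 3 by rewrite -oA cardSg // center_sub.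
  case/(dvdn_pfactor _ _ pq) => m lem oZm.
  have oAZ : (#|'Z(A)| * #|A : 'Z(A)| = q ^ 3)%N by rewrite Lagrange ?center_sub.
  case: m lem oZm => [|[|m]] lem oZm; first by move: ntZ; rewrite -cardG_gt1 oZm.
    by rewrite oZm expn1.
  have : cyclic (A / 'Z(A)).
    case: m lem oZm => [|[|m]] lem oZm.
    - apply: prime_cyclic; rewrite card_quotient //.
      move: oAZ; rewrite oZm => /eqP; rewrite !expnS expn0 !muln1.
      by rewrite -mulnA eqn_pmul2l ?prime_gt0 // eqn_pmul2l ?prime_gt0 // => /eqP ->.
    - have : #|A / 'Z(A)| = 1%N.
        rewrite card_quotient //; move: oAZ; rewrite oZm => /eqP.
        by rewrite -{2}(muln1 (q ^ 3)%N) eqn_pmul2l ?expn_gt0 ?prime_gt0 // => /eqP.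
      by move/card1_trivg => ->; exact: cyclic1.
    - by move: lem.
  by move/cyclic_center_factor_abelian; rewrite (negbTE nabA).
have sA'Z : A^`(1) \subset 'Z(A).
  apply: (der1_min nZA); apply: (card_p2group_abelian pq).
  rewrite card_quotient //; have := Lagrange (center_sub A); rewrite oZ oA.
  exact: q3_div.
have ntA' : A^`(1) != 1 by apply: contra nabA => /eqP/derG1P.
have dA' : A^`(1) = 'Z(A).
  apply/eqP; rewrite eqEcard sA'Z oZ /=.
  have : #|A^`(1)| %| q by rewrite -oZ cardSg.
  case/primeP: pq => _ /[apply] /orP[/eqP o1 | /eqP -> //].
  by move: ntA'; rewrite -cardG_gt1 o1.
have [x defZ] : exists x, 'Z(A) = <[x]> by apply/cyclicP; rewrite prime_cyclic ?oZ.
have Zx : x \in 'Z(A) by rewrite defZ cycle_id.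
have [Ax CAx] : x \in A /\ x \in 'C(A) by case/setIP: Zx.
have ntx : x != 1 by apply: contraNneq ntZ => x1; rewrite defZ x1 cycle1.
have [y Ay Hy] : exists2 y, y \in A & forall i, y * x ^+ i \notin S.
  case: (boolP (x \in S)) => Sx; first by apply: key; rewrite mulGSid // cycle_subG.
  apply: key; apply: leq_ltn_trans (card_mul_le _ _) _; rewrite -orderE.
  suff leS : (#|S| <= q)%N.
    exact: leq_ltn_trans (leq_mul leS (AF_ord_le Ax)) (qq_lt3 q1).
  have : #|S| %| q ^ 3 by rewrite -oA cardSg.
  case/(dvdn_pfactor _ _ pq) => m lem oSm.
  case: m lem oSm => [|[|[|m]]] lem oSm; rewrite oSm ?expn0 ?expn1 ?prime_gt0 //.
  - exfalso; move: Sx; apply/negP/negPn.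
    have iS : #|A : S| = q.
      apply/eqP; rewrite -(eqn_pmul2l (cardG_gt0 S)) Lagrange // oA oSm.
      by rewrite -expnSr.
    have mS : maximal S A by rewrite p_index_maximal // iS.
    have nSA := p_maximal_normal qA mS.
    have : A^`(1) \subset S.
      apply: der1_min (normal_norm nSA) _; apply: cyclic_abelian; apply: prime_cyclic.
      by rewrite card_quotient ?normal_norm // iS.
    by rewrite dA' defZ cycle_subG.
  - case: m lem oSm => // _ oSm.
    by move: ltS; rewrite oSm ltnn.
exists x, y; split => //; by rewrite dA' defZ.
Qed.

End AFacts.

Section Core.
Variables (gT : finGroupType) (q r : nat) (A P H : {group gT}).
Hypotheses (pq : prime q) (pr : prime r) (expA : exponent A = q) (oA : #|A| = (q ^ 3)%N).
Hypotheses (abP : abelian P) (abelH : r.-abelem H) (coPH : coprime #|P| #|H|).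
Hypotheses (coHq : coprime #|H| q) (coPq : coprime #|P| q).
Hypotheses (nPA : A \subset 'N(P)) (nHA : A \subset 'N(H)) (nPH : H \subset 'N(P)).
Hypotheses (tiCPH : 'C_P(H) = 1) (ntP : P :!=: 1).
Hypothesis IHH : forall H1 : {group gT}, H1 \subset H -> A \subset 'N(H1) -> H1 :!=: H -> H1 :=: 1.
Hypothesis hypA : forall a, a \in A^# -> [~: 'C_P[a], 'C_H[a]] = 1.

Lemma core_false : False.
Proof.
have abH : abelian H := abelem_abelian abelH.
have [_ expH] : abelian H /\ (forall h, h \in H -> h ^+ r = 1) by apply/abelemP.
have ordH : forall h, h \in H -> h != 1 -> #[h] = r.
  move=> h Hh nth; have dv : #[h] %| r by rewrite order_dvdn expH.
  case/primeP: pr => _ /(_ _ dv) /orP[/eqP o1|/eqP //].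
  by move: nth; rewrite -order_eq1 o1.
have ntH : H :!=: 1.
  by apply: contraNneq ntP => H1; rewrite -tiCPH H1 cent1T setIT.
have inAs : forall a, a \in A -> a != 1 -> a \in A^# by move=> a Aa nta; rewrite !inE nta.
have CP1 : forall a, a \in A -> a != 1 -> H \subset 'C[a] -> 'C_P[a] = 1.
  move=> a Aa nta sHa; apply/trivgP; rewrite -tiCPH subsetI subsetIl /=.
  have := hypA (inAs a Aa nta); rewrite (setIidPl sHa) => /commG1P.
  by rewrite centsC.
have cxyP : forall x y, commute x y -> forall w : gT, (w ^ x) ^ y = (w ^ y) ^ x.
  by move=> x y cxy w; rewrite -!conjgM cxy.
have killP : forall x y, x \in A -> y \in A -> x != 1 -> commute x y ->
    (forall i, y * x ^+ i != 1) -> H \subset 'C[x] ->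
    (forall i, H \subset 'C[y * x ^+ i]) -> False.
  move=> x y Ax Ay ntx cxy nty sHx sHy.
  have : P \subset 1%G.
    apply: (@genL _ P abP q x y pq coPq (subsetP nPA x Ax) (subsetP nPA y Ay)
                (AF_xq expA Ax) (AF_xq expA Ay) (fun w _ => cxyP x y cxy w) 1%G).
      by rewrite CP1.
    move=> i; rewrite CP1 ?groupM ?groupX //.
  by rewrite subG1 (negbTE ntP).
have rH : r %| #|H|.
  case/trivgPn: ntH => h Hh nth; by rewrite -(ordH h Hh nth) order_dvdG.
have coPr : coprime #|P| r := coprime_dvdr rH coPH.
pose pK := fun K0 : {group gT} => (K0 \subset H) && ('C_P(K0) != 1).
have pK1 : pK 1%G by rewrite /pK sub1G /= cent1T setIT ntP.
case: (arg_maxnP (fun K0 : {group gT} => #|K0|) pK1) => K /andP[sKH ntCK] maxK0.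
have bigger : forall K1 : {group gT}, K \subset K1 -> K1 \subset H -> ~~ (K1 \subset K) ->
    'C_P(K1) = 1.
  move=> K1 sKK1 sK1H nK1K; apply/eqP; apply: contraNT nK1K => ntC.
  have le := maxK0 K1 (introT andP (conj sK1H ntC)).
  by have /eqP -> : K :==: K1 by rewrite eqEcard sKK1; exact: le.
have CPY : forall (X : {group gT}) h, 'C_P(X <*> <[h]>) = 'C_('C_P(X))[h].
  by move=> X h; rewrite centY cent_cycle setIA.
have nWH : H \subset 'N('C_P(K)).
  by rewrite normsI // norms_cent // sub_abelian_norm.
have maxK : forall h, h \in H -> h \notin K -> H \subset K <*> <[h]>.
  move=> h Hh nKh; set K1 := (K <*> <[h]>)%G.
  have sK1H : K1 \subset H by rewrite join_subG sKH cycle_subG Hh.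
  have K1h : h \in K1 by rewrite /K1 /= mem_gen // inE cycle_id orbT.
  have C1 : 'C_P(K1) = 1.
    apply: bigger => //; first exact: joing_subl.
    by apply: contra nKh => sK1K; apply: (subsetP sK1K).
  apply/negPn/negP => /subsetPn [y Hy nK1y].
  have abW : abelian 'C_P(K) := abelianS (subsetIl _ _) abP.
  have : 'C_P(K) \subset 1%G.
    apply: (@genL _ 'C_P(K) abW r h y pr (coprimeSg (subsetIl _ _) coPr)
       (subsetP nWH h Hh) (subsetP nWH y Hy) (expH h Hh) (expH y Hy)
       (fun w _ => cxyP h y (centsP abH h Hh y Hy) w) 1%G).
      by rewrite -CPY C1.
    move=> i; have sJH : (K <*> <[y * h ^+ i]>)%G \subset H.
      by rewrite join_subG sKH cycle_subG groupM ?groupX.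
    rewrite -CPY (bigger _ (joing_subl _ _) sJH) //.
    apply: contra nK1y => sK.
    have Kyh : y * h ^+ i \in K by apply: (subsetP sK); rewrite mem_gen // inE cycle_id orbT.
    rewrite -(mulgK (h ^+ i) y) groupM ?groupV ?groupX //.
    by apply: (subsetP (joing_subl K <[h]>)).
  by rewrite subG1 (negbTE ntCK).
have KneH : K :!=: H by apply: contraNneq ntCK => ->; rewrite tiCPH.
case: (boolP (A \subset 'N(K))) => [nKA | nKA].
  have K1 := IHH sKH nKA KneH.
  case/trivgPn: ntH => h Hh nth.
  have defH : H :=: <[h]>.
    apply/eqP; rewrite eqEsubset cycle_subG Hh andbT.
    by rewrite -(joing1G <[h]>%G) -K1 maxK // K1 inE.
  have pH : prime #|H| by rewrite defH -orderE ordH.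
  pose f := conj_aut H.
  have cycfA : cyclic (f @* A).
    exact: cyclicS (Aut_conj_aut H A) (Aut_prime_cyclic pH).
  have lefA : (#|f @* A| <= q)%N.
    rewrite -(exponent_cyclic cycfA) dvdn_leq ?prime_gt0 //.
    by rewrite -expA exponent_morphim.
  have ofA : #|f @* A| = #|A : 'C_A(H)|.
    by rewrite card_morphim ker_conj_aut (setIidPr nHA) -indexgI.
  have : (q ^ 2 <= #|'C_A(H)|)%N.
    have LA := Lagrange (subsetIl A 'C(H)); rewrite oA in LA.
    by apply: (idx_bound (prime_gt1 pq) LA); rewrite -ofA.
  case/(AF1 pq expA oA (subsetIl A 'C(H))) => x [y [/setIP[Ax CHx] /setIP[Ay CHy] ntx cxy nyx]].
  apply: (killP x y Ax Ay ntx cxy).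
  - move=> i; apply: contra nyx => /eqP yx1.
    by rewrite -(mulgK (x ^+ i) y) yx1 mul1g groupV mem_cycle.
  - by rewrite sub_cent1.
  - by move=> i; rewrite sub_cent1 groupM ?groupX.
have nAS : ~~ (A \subset 'N_A(K)) by rewrite subsetI subxx.
have [x [y [/setIP[Ax CAx] ntx sA'x Ay nyS]]] := AF2 pq expA oA (subsetIl A 'N(K)) nAS.
have cxA : forall z, z \in A -> commute x z by move=> z Az; apply: (centP CAx).
have nCHx : A \subset 'N('C_H[x]).
  rewrite normsI //; apply: subset_trans (normG 'C[x]%G); by rewrite sub_cent1.
case: (eqVneq 'C_H[x] H) => [CHx | nCHx'].
  have sHx : H \subset 'C[x] by rewrite -CHx subsetIr.
  have [c [a [Ac Aa ncx nacx]]] := AF3 pq expA oA Ax.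
  have sxCH : <[x]> \subset 'C(H) by rewrite cycle_subG -sub_cent1.
  have C1 : forall e, e \in A -> e \notin <[x]> -> 'C_H[e] = 1.
    move=> e Ae nex; set B := (<[x]> <*> <[e]>)%G.
    have sBA : B \subset A by rewrite join_subG !cycle_subG Ax Ae.
    have sA'B : A^`(1) \subset B := subset_trans sA'x (joing_subl _ _).
    have nBA : A \subset 'N('C_H(B)).
      by rewrite normsI // norms_cent // normal_norm // sub_der1_normal.
    have CE : 'C_H(B) = 'C_H[e].
      rewrite centY !cent_cycle setIA (setIidPl sHx) //.
    rewrite -CE; apply/eqP; case: (eqVneq 'C_H(B) H) => [CHB | ne]; last first.
      by rewrite (IHH (subsetIl _ _) nBA ne).
    exfalso; have sHB : B \subset 'C(H) by rewrite centsC -CHB subsetIr.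
    apply: (killP x e Ax Ae ntx (cxA e Ae)).
    - move=> i; apply: contra nex => /eqP ex1.
      by rewrite -(mulgK (x ^+ i) e) ex1 mul1g groupV mem_cycle.
    - by [].
    - move=> i; rewrite sub_cent1 (subsetP sHB) // groupM ?groupX //.
        by rewrite mem_gen // inE cycle_id orbT.
      by rewrite mem_gen // inE cycle_id.
  have : H \subset 1%G.
    apply: (@genL _ H abH q c a pq coHq (subsetP nHA c Ac) (subsetP nHA a Aa)
       (AF_xq expA Ac) (AF_xq expA Aa) _ 1%G).
    - move=> w Hw; rewrite -!conjgM (commgC c a) (conjgM w (a * c)).
      have Rx : [~ c, a] \in 'C(H).
        by apply: (subsetP sxCH); apply: (subsetP sA'x); rewrite mem_commg.
      by rewrite fixJ //; apply: commute_sym; apply: (centP Rx);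
         rewrite memJ_norm ?groupM ?(subsetP nHA).
    - by rewrite C1.
    - by move=> i; rewrite C1 // ?nacx // groupM ?groupX.
  by rewrite subG1 (negbTE ntH).
have CHx1 := IHH (subsetIl H 'C[x]) nCHx nCHx'.
have : H \subset 'C_H('C_P(K)).
  apply: (@genL _ H abH q x y pq coHq (subsetP nHA x Ax) (subsetP nHA y Ay)
     (AF_xq expA Ax) (AF_xq expA Ay) (fun w _ => cxyP x y (cxA y Ay) w)).
    by rewrite CHx1 sub1G.
  move=> i; set e := y * x ^+ i.
  have Ae : e \in A by rewrite groupM ?groupX.
  have nKe : e \notin 'N(K) by move: (nyS i); rewrite inE Ae.
  have nte : e != 1 by apply: contraNneq nKe => ->; rewrite group1.
  rewrite subsetI subsetIl /=.
  apply: (trace_cent abP abH sKH nPH coPH tiCPH maxK (subsetP nPA e Ae) (subsetP nHA e Ae)).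
  - by rewrite (AF_ord pq expA Ae nte).
  - exact: nKe.
  - exact: hypA (inAs e Ae nte).
rewrite subsetI subxx /= centsC => sCH.
by move: ntCK; rewrite -subG1 -tiCPH subsetI subsetIl sCH.
Qed.

End Core.

Section Burnside.
Variables (gT : finGroupType) (p : nat) (P H : {group gT}).

Lemma burnside_Phi : p.-group P -> H \subset 'N(P) -> coprime #|P| #|H| ->
  [~: P, H] \subset 'Phi(P) -> [~: P, H] = 1.
Proof.
move=> pP nPH coPH sNPhi.
set N := [~: P, H].
have sNP : N \subset P by rewrite commg_subl.
have nNP : P \subset 'N(N) := commg_norml P H.
have nNH : H \subset 'N(N) := commg_normr H P.
have solN : solvable N := nilpotent_sol (pgroup_nil (pgroupS sNP pP)).
have coNH : coprime #|N| #|H| := coprimeSg sNP coPH.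
have eqC := coprime_norm_quotient_cent nPH nNH coNH solN.
have cPH : P / N \subset 'C(H / N) by apply: quotient_cents2r.
rewrite (setIidPl cPH) in eqC.
have : P \subset N * 'C_P(H) by rewrite -quotientSK // eqC.
move=> sP; have defP : 'Phi(P) <*> 'C_P(H) = P.
  apply/eqP; rewrite eqEsubset join_subG Phi_sub subsetIl /=.
  apply: subset_trans sP _; apply: mul_subG.
    exact: subset_trans sNPhi (joing_subl _ _).
  exact: joing_subr.
have := Phi_nongen defP; rewrite genGid => CP.
by apply/commG1P; rewrite -CP subsetIr.
Qed.

End Burnside.

Definition MTH (gT : finGroupType) (q p : nat) (A P H : {group gT}) : Prop :=
  [/\ [/\ prime q, exponent A = q, #|A| = (q ^ 3)%N, coprime #|P| q & coprime #|H| q],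
      [/\ A \subset 'N(P), A \subset 'N(H), H \subset 'N(P), prime p & p.-group P],
      nilpotent H, p^'.-group H &
      forall a, a \in A^# -> [~: 'C_P[a], 'C_H[a]] = 1].

Lemma MTH_sub (gT : finGroupType) q p (A P H P1 H1 : {group gT}) :
  MTH q p A P H -> P1 \subset P -> H1 \subset H ->
  A \subset 'N(P1) -> A \subset 'N(H1) -> H1 \subset 'N(P1) -> MTH q p A P1 H1.
Proof.
case=> [[pq eA oA cPq cHq] [nPA nHA nPH pp pP] nilH p'H hyp] sP1 sH1 nP1A nH1A nP1H1.
split => //.
- by split => //; [exact: coprimeSg sP1 cPq | exact: coprimeSg sH1 cHq].
- by split => //; exact: pgroupS sP1 pP.
- exact: nilpotentS sH1 nilH.
- exact: pgroupS sH1 p'H.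
move=> a Aa; apply/trivgP; rewrite -(hyp a Aa) commgSS ?setSI //.
Qed.

Lemma MTH_quo (gT : finGroupType) q p (A P H N : {group gT}) :
  MTH q p A P H -> coprime #|N| q -> solvable N ->
  P \subset 'N(N) -> H \subset 'N(N) -> A \subset 'N(N) ->
  MTH q p (A / N) (P / N) (H / N).
Proof.
case=> [[pq eA oA cPq cHq] [nPA nHA nPH pp pP] nilH p'H hyp] coNq solN nNP nNH nNA.
have coNA : coprime #|N| #|A| by rewrite oA coprimeXr.
have tiNA : N :&: A = 1 := coprime_TIg coNA.
have isoA : A \isog A / N := quotient_isog nNA tiNA.
split.
- split => //; first by rewrite -(exponent_isog isoA).
  + by rewrite -(card_isog isoA).
  + exact: coprime_morphl.
  + exact: coprime_morphl.
- by split => //; [exact: quotient_norms | exact: quotient_norms | exact: quotient_norms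
                  | exact: quotient_pgroup].
- exact: quotient_nil.
- exact: quotient_pgroup.
move=> ab /setD1P[ntab Aab]; case/morphimP: Aab => a Na Aa def.
have nta : a != 1 by apply: contraNneq ntab => a1; rewrite def a1 morph1.
have coa : coprime #|N| #|<[a]>|.
  by apply: coprime_dvdr coNq; rewrite -orderE -eA dvdn_exponent.
have nPa : <[a]> \subset 'N(P) by rewrite cycle_subG (subsetP nPA).
have nHa : <[a]> \subset 'N(H) by rewrite cycle_subG (subsetP nHA).
have nNa : <[a]> \subset 'N(N) by rewrite cycle_subG.
have EP : 'C_P[a] / N = 'C_(P / N)[ab].
  by rewrite -cent_cycle coprime_norm_quotient_cent // quotient_cycle // cent_cycle def.
have EH : 'C_H[a] / N = 'C_(H / N)[ab].
  by rewrite -cent_cycle coprime_norm_quotient_cent // quotient_cycle // cent_cycle def.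
rewrite -EP -EH -quotientR; last 2 first.
- exact: subset_trans (subsetIl _ _) nNP.
- exact: subset_trans (subsetIl _ _) nNH.
by rewrite hyp ?quotient1 // !inE nta.
Qed.

Theorem MT n : forall (gT : finGroupType) q p (A P H : {group gT}),
  (#|P| + #|H| <= n)%N -> MTH q p A P H -> [~: P, H] = 1.
Proof.
elim: n => [|n IHn] gT q p A P H le MH.
  by move: le (cardG_gt0 P); rewrite leqn0 addn_eq0 => /andP[/eqP-> _].
have IH : forall (A' P' H' : {group gT}), (#|P'| + #|H'| < #|P| + #|H|)%N ->
    MTH q p A' P' H' -> [~: P', H'] = 1.
  move=> A' P' H' lt MH'; apply: (IHn gT q p A' P' H') => //.
  by rewrite -ltnS (leq_trans lt le).
have IHq : forall (N : {group gT}) (A' P' H' : {group coset_of N}),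
    (#|P'| + #|H'| < #|P| + #|H|)%N -> MTH q p A' P' H' -> [~: P', H'] = 1.
  move=> N A' P' H' lt MH'; apply: (IHn _ q p A' P' H') => //.
  by rewrite -ltnS (leq_trans lt le).
case: (MH) => [[pq eA oA cPq cHq] [nPA nHA nPH pp pP] nilH p'H hyp].
have coPH : coprime #|P| #|H| := pnat_coprime pP p'H.
case: (eqsVneq P 1) => [-> | ntP]; first by rewrite comm1G.
case: (eqsVneq H 1) => [-> | ntH]; first by rewrite commG1.
pose r := pdiv #|H|.
have pr : prime r by apply: pdiv_prime; rewrite cardG_gt1.
case: (boolP (r.-group H)) => [rH | nrH]; last first.
  have nHrA : A \subset 'N('O_r(H)) := char_norm_trans (pcore_char _ _) nHA.
  have nHr'A : A \subset 'N('O_r^'(H)) := char_norm_trans (pcore_char _ _) nHA.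
  have sHr : 'O_r(H) \subset H := pcore_sub _ _.
  have sHr' : 'O_r^'(H) \subset H := pcore_sub _ _.
  have defH := dprodW (nilpotent_pcoreC r nilH).
  have ltr : (#|P| + #|'O_r(H)| < #|P| + #|H|)%N.
    rewrite ltn_add2l proper_card // properEneq sHr andbT.
    by apply: contraNneq nrH => <-; apply: pcore_pgroup.
  have ltr' : (#|P| + #|'O_r^'(H)| < #|P| + #|H|)%N.
    rewrite ltn_add2l proper_card // properEneq sHr' andbT.
    apply/eqP => eH; have : r^'.-group H by rewrite -eH pcore_pgroup.
    move/pgroupP => /(_ r pr (pdiv_dvd _)); by rewrite !inE eqxx.
  have c1 := IH _ _ _ ltr (MTH_sub MH (subxx P) sHr nPA nHrA (subset_trans sHr nPH)).
  have c2 := IH _ _ _ ltr' (MTH_sub MH (subxx P) sHr' nPA nHr'A (subset_trans sHr' nPH)).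
  apply/commG1P; rewrite centsC -defH mul_subG // centsC; exact/commG1P.
pose C := 'C_H(P).
have sCH : C \subset H := subsetIl _ _.
case: (eqsVneq C 1) => [C1 | ntC]; last first.
  have nCP : P \subset 'N(C) by apply: cents_norm; rewrite centsC subsetIr.
  have nCH : H \subset 'N(C) by have := subcent_norm H P; rewrite (setIidPl nPH).
  have nCA : A \subset 'N(C) := normsI nHA (norms_cent nPA).
  have solC : solvable C := nilpotent_sol (nilpotentS sCH nilH).
  have MHq := MTH_quo MH (coprimeSg sCH cHq) solC nCP nCH nCA.
  have lt : (#|P / C| + #|H / C| < #|P| + #|H|)%N.
    by rewrite -addnS leq_add ?leq_quotient // ltn_quotient.
  have := IHq _ _ _ _ lt MHq; rewrite -quotientR // => /eqP.
  rewrite -subG1 quotient_sub1; last by apply: subset_trans nCP; rewrite commg_subl.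
  move=> sRC; apply/trivgP; rewrite -(coprime_TIg coPH) subsetI commg_subl nPH /=.
  exact: subset_trans sRC sCH.
have PhiH1 : 'Phi(H) = 1.
  apply/eqP; apply: contraT => ntPhi.
  have sPhi := Phi_sub H; have nPhiA := char_norm_trans (Phi_char H) nHA.
  have lt : (#|P| + #|'Phi(H)| < #|P| + #|H|)%N.
    by rewrite ltn_add2l proper_card // Phi_proper.
  have := IH _ _ _ lt (MTH_sub MH (subxx P) sPhi nPA nPhiA (subset_trans sPhi nPH)).
  move/commG1P => cPPhi.
  have : 'Phi(H) \subset C by rewrite subsetI sPhi centsC.
  by rewrite C1 subG1 (negbTE ntPhi).
have abelH : r.-abelem H by rewrite -trivg_Phi // PhiH1.
case: (eqsVneq 'Phi(P) 1) => [PhiP1 | ntPhiP]; last first.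
  have sN := Phi_sub P.
  have nNP : P \subset 'N('Phi(P)) := normal_norm (Phi_normal P).
  have nNH : H \subset 'N('Phi(P)) := char_norm_trans (Phi_char P) nPH.
  have nNA : A \subset 'N('Phi(P)) := char_norm_trans (Phi_char P) nPA.
  have solN : solvable 'Phi(P) := nilpotent_sol (pgroup_nil (pgroupS sN pP)).
  have MHq := MTH_quo MH (coprimeSg sN cPq) solN nNP nNH nNA.
  have lt : (#|P / 'Phi(P)| + #|H / 'Phi(P)| < #|P| + #|H|)%N.
    by rewrite -addSn leq_add ?leq_quotient // ltn_quotient.
  have := IHq _ _ _ _ lt MHq; rewrite -quotientR // => /eqP.
  rewrite -subG1 quotient_sub1; last by apply: subset_trans nNP; rewrite commg_subl.
  exact: burnside_Phi pP nPH coPH.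
have abP : abelian P.
  by apply: (@abelem_abelian _ p); rewrite -trivg_Phi // PhiP1.
pose Q := [~: P, H].
have sQP : Q \subset P by rewrite commg_subl.
case: (eqsVneq Q P) => [QP | nQP]; last first.
  have nQA : A \subset 'N(Q) := normsR nPA nHA.
  have nQH : H \subset 'N(Q) := commg_normr H P.
  have lt : (#|Q| + #|H| < #|P| + #|H|)%N.
    by rewrite ltn_add2r proper_card // properEneq nQP.
  have := IH _ _ _ lt (MTH_sub MH sQP (subxx H) nQA nHA nQH).
  move/commG1P => cQH.
  apply/trivgP; rewrite -(coprime_abel_cent_TI nPH coPH abP) subsetI subxx.
  by rewrite cQH.
have tiCPH : 'C_P(H) = 1.
  by rewrite -{1}QP coprime_abel_cent_TI.
exfalso; apply: (core_false pq pr eA oA abP abelH coPH cHq cPq nPA nHA nPH tiCPH ntP _ hyp).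
move=> H1 sH1 nH1A neH1.
have lt : (#|P| + #|H1| < #|P| + #|H|)%N.
  by rewrite ltn_add2l proper_card // properEneq neH1.
have := IH _ _ _ lt (MTH_sub MH (subxx P) sH1 nPA nH1A (subset_trans sH1 nPH)).
move/commG1P => cPH1; apply/trivgP; rewrite -C1 subsetI sH1 centsC.
by [].
Qed.

Theorem lemma2p5 (aT rT : finGroupType) (q p : nat)
    (A : {group aT}) (G P H : {group rT}) (to : groupAction A G) :
  prime q -> exponent A = q -> #|A| = (q ^ 3)%N ->
  coprime #|G| q ->
  P * H = G ->
  [acts A, on P | to] -> [acts A, on H | to] ->
  prime p -> p.-group P -> P <| G ->
  nilpotent H -> p^'.-group H ->
  (forall a, a \in A^# -> [~: 'C_(P | to)[a], 'C_(H | to)[a]] = 1) ->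
  [~: P, H] = 1.
Proof.
move=> pq eA oA coGq defG actsP actsH pp pP nPG nilH p'H hyp.
have sPG : P \subset G by rewrite -defG mulG_subl.
have sHG : H \subset G by rewrite -defG mulG_subr.
pose f1 := sdpair1 to; pose f2 := sdpair2 to.
have inj1 : 'injm f1 := injm_sdpair1 to.
have inj2 : 'injm f2 := injm_sdpair2 to.
have MH : MTH q p (f2 @* A) (f1 @* P) (f1 @* H).
  split.
  - split => //.
    + by rewrite exponent_injm.
    + by rewrite card_injm.
    + by rewrite card_injm // (coprimeSg sPG).
    + by rewrite card_injm // (coprimeSg sHG).
  - split => //.
    + by rewrite -actsEsd.
    + by rewrite -actsEsd.
    + by apply: morphim_norms; apply: subset_trans sHG (normal_norm nPG).
    + exact: morphim_pgroup.
  - exact: morphim_nil.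
  - exact: morphim_pgroup.
  move=> a' /setD1P[nta' /morphimP[a Da Aa def]].
  have nta : a != 1 by apply: contraNneq nta' => a1; rewrite def a1 morph1.
  have EC : forall X : {group rT}, X \subset G ->
      f1 @* 'C_(X | to)[a] = 'C_(f1 @* X)[a'].
    move=> X sXG; rewrite gacentEsd morphim_setIpre morphim_set1 //.
    by rewrite def cent_set1.
  rewrite -(EC P sPG) -(EC H sHG) -morphimR.
  - by rewrite hyp ?morphim1 // !inE nta.
  - exact: subset_trans (subsetIl _ _) sPG.
  - exact: subset_trans (subsetIl _ _) sHG.
have := MT (leqnn _) MH; rewrite -morphimR // => /eqP.
rewrite morphim_injm_eq1 //; first by move/eqP.
by apply: subset_trans (commg_sub _ _) _; rewrite join_subG sPG sHG.
Qed.
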